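(* Let $f:X_1\to X_2$ be an L-morphism between L-spaces. (1) If $f$ is proper and $X_1$ is an algebraic L-space, then $f$ is coherent. (2) If $f$ is coherent and $X_2$ is an algebraic L-space, then $f$ is proper. (3) If $X_1$ and $X_2$ are algebraic L-spaces, then $f$ is coherent if and only if $f$ is proper.
   Context: A Priestley space is a Stone space $X$ with a partial order such that clopen upsets separate points. An L-space is a Priestley space in which the downset of each clopen set is clopen and the closure of each open upset is open. ${\sf ClopUp}(X)$ is the set of clopen upsets; $\mathrm{cl}$ denotes closure. An L-morphism is a continuous order-preserving map $f:X\to X'$ between L-spaces with $f^{-1}(\mathrm{cl}\,U)=\mathrm{cl}\,f^{-1}(U)$ for every open upset $U$ of $X'$. The spatial part of $X$ is $Y=\{y\in X\mid{\downarrow}y\text{ clopen}\}$. A Scott upset is a closed upset $F$ with $\min F\subseteq Y$; ${\sf ClopSUp}(X)$ is the set of clopen Scott upsets. For $U,V\in{\sf ClopUp}(X)$, $V\ll U$ means that for every open upset $W$, $U\subseteq\mathrm{cl}\,W$ implies $V\subseteq W$; $\ker U=\bigcup\{V\in{\sf ClopUp}(X)\mid V\ll U\}$; $\mathrm{core}\,U=\bigcup\{V\in{\sf ClopSUp}(X)\mid V\subseteq U\}$. $X$ is an algebraic L-space if $\mathrm{core}\,U$ is dense in $U$ for each $U\in{\sf ClopUp}(X)$. An L-morphism $f:X_1\to X_2$ is proper if $f^{-1}(\ker U)\subseteq\ker f^{-1}(U)$ for all $U\in{\sf ClopUp}(X_2)$, and coherent if $f^{-1}(\mathrm{core}\,U)\subseteq\mathrm{core}\,f^{-1}(U)$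 for all $U\in{\sf ClopUp}(X_2)$. *)

(* Defs.v *)
From HB Require Import structures.
From mathcomp Require Import all_boot all_order.
From mathcomp Require Import all_classical all_reals all_analysis.

Set Implicit Arguments.
Unset Strict Implicit.
Unset Printing Implicit Defensive.

Local Open Scope classical_set_scope.

Section LSpaces.
Context {X : topologicalType} (le : X -> X -> Prop).

Definition is_partial_order : Prop :=
  [/\ (forall x, le x x),
      (forall x y, le x y -> le y x -> x = y) &
      (forall x y z, le x y -> le y z -> le x z)].

Definition stone_space : Prop :=
  [/\ compact [set: X], hausdorff_space X & totally_disconnected [set: X]].

Definition upset (U : set X) : Prop := forall x y, U x -> le x y -> U y.

Definition down (A : set X) : set X := [set y | exists2 x, A x & le y x].

Definition clopen_upset (U : set X) : Prop := clopen U /\ upset U.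

Definition priestley_space : Prop :=
  [/\ stone_space, is_partial_order &
      (forall x y, ~ le x y -> exists U, [/\ clopen_upset U, U x & ~ U y])].

Definition L_space : Prop :=
  [/\ priestley_space,
      (forall U : set X, clopen U -> clopen (down U)) &
      (forall U : set X, open U -> upset U -> open (closure U))].

Definition spatial_part : set X := [set y | clopen (down [set y])].

Definition minimal_elts (F : set X) : set X :=
  [set x | F x /\ forall z, F z -> le z x -> z = x].

Definition scott_upset (F : set X) : Prop :=
  [/\ closed F, upset F & minimal_elts F `<=` spatial_part].

Definition clopen_scott_upset (U : set X) : Prop := clopen U /\ scott_upset U.

Definition way_below (V U : set X) : Prop :=
  forall W : set X, open W -> upset W -> U `<=` closure W -> V `<=` W.

Definition ker (U : set X) : set X :=
  [set x | exists V, [/\ clopen_upset V, way_below V U & V x]].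

Definition core (U : set X) : set X :=
  [set x | exists V, [/\ clopen_scott_upset V, V `<=` U & V x]].

Definition algebraic_L_space : Prop :=
  L_space /\ forall U, clopen_upset U -> U `<=` closure (core U).

End LSpaces.

Section Morphisms.
Context {X1 X2 : topologicalType} (le1 : X1 -> X1 -> Prop)
  (le2 : X2 -> X2 -> Prop) (f : X1 -> X2).

Definition L_morphism : Prop :=
  [/\ continuous f,
      (forall x y, le1 x y -> le2 (f x) (f y)) &
      (forall U : set X2, open U -> upset le2 U ->
         f @^-1` (closure U) = closure (f @^-1` U))].

Definition proper_morphism : Prop :=
  forall U : set X2, clopen_upset le2 U ->
    f @^-1` (ker le2 U) `<=` ker le1 (f @^-1` U).

Definition coherent_morphism : Prop :=
  forall U : set X2, clopen_upset le2 U ->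
    f @^-1` (core le2 U) `<=` core le1 (f @^-1` U).

End Morphisms.

(* Main.v *)
Require Import Defs.
From mathcomp Require Import all_boot all_order.
From mathcomp Require Import all_classical all_reals all_analysis.

Set Implicit Arguments.
Unset Strict Implicit.
Unset Printing Implicit Defensive.
Local Open Scope classical_set_scope.

Section Aux.
Context {X : topologicalType} (le : X -> X -> Prop).

Lemma down_closed c : priestley_space le -> closed [set y | le y c].
Proof.
move=> [_ _ sep] y cly; apply/not_notP => nyc.
have [U [[[oU _] upU] Uy nUc]] := sep _ _ nyc.
have [z [zc Uz]] := cly U (open_nbhs_nbhs (conj oU Uy)).
by apply: nUc; apply: upU zc.
Qed.

Lemma chain_fin (po : is_partial_order le) (D : set X) (x : X) (Dx : D x)
  (tot : forall a b, D a -> D b -> le a b \/ le b a) (s : seq X) :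
  (forall i, i \in s -> D i) ->
  exists m, D m /\ forall i, i \in s -> le m i.
Proof.
elim: s => [|a s IH] Hs.
  by exists x; split => // i; rewrite in_nil.
have [|m [Dm Hm]] := IH.
  by move=> i iin; apply: Hs; rewrite in_cons iin orbT.
have Da : D a by apply: Hs; rewrite in_cons eqxx.
have [ma|am] := tot m a Dm Da.
  exists m; split => // i; rewrite in_cons => /orP[/eqP->//|]; exact: Hm.
case: po => refl _ trans.
exists a; split => // i; rewrite in_cons => /orP[/eqP->//|iin].
exact: trans am (Hm _ iin).
Qed.

Lemma exists_minimal (pr : priestley_space le) (S : set X) (cS : closed S)
  x (Sx : S x) : exists m, [/\ S m, le m x & forall z, S z -> le z m -> z = m].
Proof.
have pr' := pr; case: pr' => [[cpt _ _] po _].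
have po' := po; case: po' => refl anti trans.
pose T := fun y => S y /\ le y x.
have Tx : T x by [].
pose R := fun a b : X => `[< a = b \/ (T b /\ (T a -> le b a)) >].
have [t Hmax] : exists t, forall s, R t s -> s = t.
  apply: Zorn.
- by move=> t; apply/asboolP; left.
- move=> r s t /asboolP Hrs /asboolP Hst; apply/asboolP.
  case: Hrs => [->//|[Ts Hsr]]; case: Hst => [<-|[Tt Hts]]; first by right.
  by right; split => // Tr; apply: trans (Hts Ts) (Hsr Tr).
- move=> s t /asboolP Hst /asboolP Hts.
  case: Hst => [//|[Tt Hts']]; case: Hts => [//|[Ts Hst']].
  exact: anti (Hst' Tt) (Hts' Ts).
- move=> A totA.
  pose D := [set c | (A c /\ T c) \/ c = x].
  have Dx : D x by right.
  have DT c : D c -> T c by case=> [[]|->].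
  have tot a b : D a -> D b -> le a b \/ le b a.
    move=> [[Aa Ta]|->]; last by move=> /DT [] _; right.
    move=> [[Ab Tb]|->]; last by left; case: Ta.
    case: (totA a b Aa Ab) => /asboolP.
      by case=> [->|[_ H]]; [left|right; apply: H].
    by case=> [->|[_ H]]; [left|left; apply: H].
  pose f c := [set y | S y /\ le y c].
  have finIf : finI D f.
    move=> D' sub.
    have [|m [Dm Hm]] := chain_fin po Dx tot (s := finmap.enum_fset D').
      by move=> i ii; have := sub i ii; rewrite inE.
    exists m => i /= ii; split; [by case: (DT _ Dm)|exact: Hm].
  have FF := finI_filter finIf.
  have [p [_ clp]] := cpt _ FF filterT.
  rewrite clusterE in clp.
  have pc c : D c -> f c p.
    move=> Dc.
    have cf : closed (f c) by apply: closedI => //; apply: down_closed.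
    have e := (closure_id (f c)).1 cf; rewrite e; apply: clp.
    by exists (f c) => //; apply: finI_from1.
  have Tp : T p by apply: pc.
  exists p => s As; apply/asboolP; right; split => // Ts.
  by case: (pc s (or_introl (conj As Ts))).
have Tt : T t.
  case: (pselect (T t)) => // nTt.
  have xt := Hmax x (asboolT (or_intror (conj Tx (fun h => False_ind _ (nTt h))))).
  by rewrite -xt.
exists t; split; [by case: Tt|by case: Tt|].
move=> z Sz zt; apply: Hmax; apply/asboolP; right; split => //.
by split => //; apply: trans zt (Tt.2).
Qed.

Lemma core_open_upset U : open (core le U) /\ upset le (core le U).
Proof.
split.
  have -> : core le U = \bigcup_(V in [set V | clopen_scott_upset le V /\ V `<=` U]) V.
    by apply/seteqP; split => y [V]; [case=> cV VU Vy; exists V|move=> [cV VU] Vy; exists V].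
  by apply: bigcup_open => V [[[oV _] _] _].
move=> y z [V [cV VU Vy]] yz; exists V; split => //.
by case: cV => _ [_ upV _]; apply: upV yz.
Qed.

Lemma core_sub_ker (pr : priestley_space le) U : core le U `<=` ker le U.
Proof.
have pr' := pr; case: pr' => _ [refl _ _] _.
move=> x [V [[cV [clV upV minV]] VU Vx]]; exists V; split => //.
move=> W oW upW UW y Vy; apply/not_notP => nWy.
have [m [Vm my minm]] := exists_minimal pr clV Vy.
have sp : spatial_part le m := minV m (conj Vm minm).
have mcl : closure W m := UW _ (VU _ Vm).
have [w [Ww [m' m'eq wm]]] :=
  mcl _ (open_nbhs_nbhs (conj sp.1 (@ex_intro2 _ _ _ m erefl (refl m)))).
rewrite /= in m'eq; subst m'.
by apply: nWy; exact: (upW _ _ (upW _ _ Ww wm) my).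
Qed.

Lemma ker_sub_core (alg : algebraic_L_space le) U (cu : clopen_upset le U) :
  ker le U `<=` core le U.
Proof.
move=> x [V [_ wb Vx]]; have [oc uc] := core_open_upset U.
exact: (wb (core le U) oc uc (alg.2 U cu)).
Qed.

End Aux.

Lemma preimage_cu (X1 X2 : topologicalType)
  (le1 : X1 -> X1 -> Prop) (le2 : X2 -> X2 -> Prop) (f : X1 -> X2) U :
  L_morphism le1 le2 f -> clopen_upset le2 U -> clopen_upset le1 (f @^-1` U).
Proof.
move=> [fc mono _] [[oU clU] upU]; split; [split|].
- by apply: open_comp => // x _; apply: fc.
- exact: (continuous_closedP f).1 fc _ clU.
- by move=> x y Ux xy; apply: upU (mono _ _ xy).
Qed.

Theorem lemma4p7 (X1 X2 : topologicalType)
  (le1 : X1 -> X1 -> Prop) (le2 : X2 -> X2 -> Prop) (f : X1 -> X2) :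
  L_space le1 -> L_space le2 -> L_morphism le1 le2 f ->
  [/\ (proper_morphism le1 le2 f -> algebraic_L_space le1 ->
         coherent_morphism le1 le2 f),
      (coherent_morphism le1 le2 f -> algebraic_L_space le2 ->
         proper_morphism le1 le2 f) &
      (algebraic_L_space le1 -> algebraic_L_space le2 ->
         (coherent_morphism le1 le2 f <-> proper_morphism le1 le2 f))].
Proof.
move=> [pr1 _ _] [pr2 _ _] fm.
have P1 : proper_morphism le1 le2 f -> algebraic_L_space le1 ->
         coherent_morphism le1 le2 f.
  move=> pf alg1 U cu x cx.
  have H := ker_sub_core alg1 (preimage_cu fm cu).
  apply: H; apply: pf => //.
  by apply: (core_sub_ker pr2).
have P2 : coherent_morphism le1 le2 f -> algebraic_L_space le2 ->
         proper_morphism le1 le2 f.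
  move=> cf alg2 U cu x kx.
  have H := core_sub_ker pr1 (U := f @^-1` U).
  apply: H; apply: cf => //.
  by apply: (ker_sub_core alg2 cu).
split => // a1 a2; split => ?; [exact: P2|exact: P1].
Qed.
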